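(* Let $k\ge2$. If $x^*,y^*\in\Delta^{d-1}$ satisfy $F^k(x^* )=F^k(y^* )=\inf_{x\in\Delta^{d-1}}F^k(x)$, then $x^*=y^*$; i.e. the minimum of $F^k$ on $\Delta^{d-1}$ is attained at a unique point.
   Context: Fix $k\ge2$ and $d=4\cdot3^{k-1}$. $\Delta^{d-1}=\{x\in\mathbb{R}^d: x_i>0,\ \sum_i x_i=1\}$. For $j=1,2,3,4$, $I_j=\{(j-1)3^{k-1}+1,\dots,j\cdot3^{k-1}\}$ and $\Sigma_j(x)=\sum_{l\in I_j}x_l$. Let $\sigma(t)=(1-t)/t$. For $i\in\{1,\dots,d\}$ let $j(i)=1,4,3,2$ according as $i\equiv0,1,2,3\pmod4$, $f_i(x)=\sigma(\Sigma_{j(i)}(x))\sigma(x_i)$, and $F^k(x)=\max_{1\le i\le d}f_i(x)$. *)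

(* Defs.v *)
(* real numbers. Points of R^d are functions nat -> R,
   with coordinates indexed 1..d (other values irrelevant). *)
From Stdlib Require Import Reals List Arith.
Import ListNotations.
Open Scope R_scope.

Definition dim (k : nat) : nat := (4 * 3 ^ (k - 1))%nat.

Definition sum_range (x : nat -> R) (a n : nat) : R :=
  fold_right Rplus 0 (map x (seq a n)).

Definition in_simplex (k : nat) (x : nat -> R) : Prop :=
  (forall i, (1 <= i <= dim k)%nat -> 0 < x i) /\ sum_range x 1 (dim k) = 1.

Definition Sigma (k j : nat) (x : nat -> R) : R :=
  sum_range x ((j - 1) * 3 ^ (k - 1) + 1) (3 ^ (k - 1)).

Definition sigma (t : R) : R := (1 - t) / t.

Definition jidx (i : nat) : nat :=
  match (i mod 4)%nat with
  | 0%nat => 1%nat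
  | 1%nat => 4%nat
  | 2%nat => 3%nat
  | _ => 2%nat
  end.

Definition f_i (k i : nat) (x : nat -> R) : R :=
  sigma (Sigma k (jidx i) x) * sigma (x i).

Definition Fk (k : nat) (x : nat -> R) : R :=
  fold_right Rmax (f_i k 1 x) (map (fun i => f_i k i x) (seq 1 (dim k))).

Definition is_inf_on_simplex (k : nat) (v : R) : Prop :=
  (forall x, in_simplex k x -> v <= Fk k x) /\
  (forall l, (forall x, in_simplex k x -> l <= Fk k x) -> l <= v).

(* Main.v *)
Require Import Defs.
From Stdlib Require Import Reals List Arith.
From Stdlib Require Import Lra Lia Psatz.
Open Scope R_scope.

Lemma sr_S f a n : sum_range f a (S n) = f a + sum_range f (S a) n.
Proof. reflexivity. Qed.

Lemma sr_0 f a : sum_range f a 0 = 0.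
Proof. reflexivity. Qed.

Lemma sr_app f a n1 n2 :
  sum_range f a (n1 + n2) = sum_range f a n1 + sum_range f (a + n1) n2.
Proof.
  revert a; induction n1 as [|n1 IH]; intro a.
  - rewrite sr_0, Nat.add_0_r; simpl; lra.
  - simpl (S n1 + n2)%nat. rewrite !sr_S, IH.
    replace (S a + n1)%nat with (a + S n1)%nat by lia. lra.
Qed.

Lemma sr_minus f g a n :
  sum_range (fun i => f i - g i) a n = sum_range f a n - sum_range g a n.
Proof.
  revert a; induction n as [|n IH]; intro a.
  - rewrite !sr_0; lra.
  - rewrite !sr_S, IH; lra.
Qed.

Lemma sr_const c a n : sum_range (fun _ => c) a n = INR n * c.
Proof.
  revert a; induction n as [|n IH]; intro a.
  - rewrite sr_0; simpl; lra.
  - rewrite sr_S, IH, S_INR; lra.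
Qed.

Lemma sr_nonneg f a n : (forall i, (a <= i < a + n)%nat -> 0 <= f i) ->
  0 <= sum_range f a n.
Proof.
  revert a; induction n as [|n IH]; intros a H.
  - rewrite sr_0; lra.
  - rewrite sr_S. assert (0 <= f a) by (apply H; lia).
    assert (0 <= sum_range f (S a) n) by (apply IH; intros; apply H; lia). lra.
Qed.

Lemma sr_pos f a n : (0 < n)%nat -> (forall i, (a <= i < a + n)%nat -> 0 < f i) ->
  0 < sum_range f a n.
Proof.
  intros Hn H. destruct n as [|n]; [lia|].
  rewrite sr_S. assert (0 < f a) by (apply H; lia).
  assert (0 <= sum_range f (S a) n) by (apply sr_nonneg; intros; left; apply H; lia). lra.
Qed.

Lemma sr_zero f a n : (forall i, (a <= i < a + n)%nat -> 0 <= f i) ->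
  sum_range f a n = 0 -> forall i, (a <= i < a + n)%nat -> f i = 0.
Proof.
  revert a; induction n as [|n IH]; intros a H Hs i Hi.
  - lia.
  - rewrite sr_S in Hs. assert (0 <= f a) by (apply H; lia).
    assert (0 <= sum_range f (S a) n) by (apply sr_nonneg; intros; apply H; lia).
    destruct (Nat.eq_dec i a) as [->|Hne]; [lra|].
    apply (IH (S a)); [intros; apply H; lia | lra | lia].
Qed.

Lemma jidx_shift a r : jidx (4 * a + r) = jidx r.
Proof.
  unfold jidx. replace (4 * a + r)%nat with (r + a * 4)%nat by lia.
  rewrite Nat.Div0.mod_add. reflexivity.
Qed.

Lemma sr_period (G : nat -> R) m a :
  sum_range (fun i => G (jidx i)) (4 * a + 1) (4 * m) =
  INR m * (G 1%nat + G 2%nat + G 3%nat + G 4%nat).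
Proof.
  revert a; induction m as [|m IH]; intro a.
  - rewrite Nat.mul_0_r, sr_0; simpl; lra.
  - replace (4 * S m)%nat with (4 + 4 * m)%nat by lia.
    rewrite sr_app.
    replace (4 * a + 1 + 4)%nat with (4 * S a + 1)%nat by lia.
    rewrite IH, S_INR.
    rewrite !sr_S, sr_0.
    rewrite (jidx_shift a 1).
    replace (S (4 * a + 1)) with (4 * a + 2)%nat by lia.
    replace (S (4 * a + 2)) with (4 * a + 3)%nat by lia.
    replace (S (4 * a + 3)) with (4 * S a + 0)%nat by lia.
    rewrite (jidx_shift a 2), (jidx_shift a 3), (jidx_shift (S a) 0).
    unfold jidx; simpl. lra.
Qed.

Lemma fold_max_ge y b l : In y l -> y <= fold_right Rmax b l.
Proof.
  induction l as [|z l IH]; simpl; [tauto|].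
  intros [->|H]; [apply Rmax_l|].
  eapply Rle_trans; [apply IH; exact H| apply Rmax_r].
Qed.

Lemma fold_max_le c b l : b <= c -> (forall y, In y l -> y <= c) ->
  fold_right Rmax b l <= c.
Proof.
  induction l as [|z l IH]; simpl; intros Hb H; [exact Hb|].
  apply Rmax_lub; [apply H; auto| apply IH; auto].
Qed.

Lemma fi_le_Fk k i x : (1 <= i <= dim k)%nat -> f_i k i x <= Fk k x.
Proof.
  intro Hi. unfold Fk. apply fold_max_ge.
  apply in_map_iff. exists i. split; [reflexivity|]. apply in_seq. lia.
Qed.

Definition Tl (D S : R) : R := 1 / D - 16 * (D - 1) / (3 * D ^ 2) * (S - 1 / 4).

Lemma key D S x : 4 <= D -> 0 < S -> 0 < x -> Defs.sigma S * Defs.sigma x <= 3 * (D - 1) ->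
  0 <= x - Tl D S /\ (x - Tl D S = 0 -> S = 1/4).
Proof.
  intros HD HS Hx H. unfold Defs.sigma in H.
  assert (H1 : (1 - S) * (1 - x) <= 3 * (D - 1) * (S * x)).
  { replace ((1 - S) * (1 - x)) with ((1 - S) / S * ((1 - x) / x) * (S * x)) by (field; lra).
    apply Rmult_le_compat_r; [nra|exact H]. }
  assert (HDp : 0 < 1 + (3 * D - 4) * S) by nra.
  assert (Hid : (1 - S) - Tl D S * (1 + (3 * D - 4) * S) =
     16 * (D - 1) * (3 * D - 4) / (3 * D ^ 2) * (S - 1/4) ^ 2).
  { unfold Tl. field. lra. }
  assert (HK : 0 < 16 * (D - 1) * (3 * D - 4) / (3 * D ^ 2)).
  { apply Rdiv_lt_0_compat; nra. }
  assert (Hsq : 0 <= (S - 1/4) ^ 2) by apply pow2_ge_0.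
  assert (Hx1 : x * (1 + (3 * D - 4) * S) >= 1 - S) by nra.
  assert (Hm : (x - Tl D S) * (1 + (3 * D - 4) * S) >=
     16 * (D - 1) * (3 * D - 4) / (3 * D ^ 2) * (S - 1/4) ^ 2).
  { rewrite <- Hid. ring_simplify. ring_simplify in Hx1. lra. }
  split.
  - assert (0 <= (x - Tl D S) * (1 + (3 * D - 4) * S)) by nra. nra.
  - intro E. rewrite E in Hm.
    assert ((S - 1/4) ^ 2 = 0) by nra. nra.
Qed.

Lemma dimR k : INR (dim k) = 4 * INR (3 ^ (k - 1)).
Proof. unfold dim. rewrite mult_INR. simpl. lra. Qed.

Lemma m_pos k : (0 < 3 ^ (k - 1))%nat.
Proof. apply Nat.neq_0_lt_0, Nat.pow_nonzero; lia. Qed.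

Lemma Mge1 k : 1 <= INR (3 ^ (k - 1)).
Proof. pose proof (m_pos k). apply (le_INR 1); lia. Qed.

Lemma Sigma_pos k j x : in_simplex k x -> (1 <= j <= 4)%nat -> 0 < Sigma k j x.
Proof.
  intros [Hp _] Hj. unfold Sigma. pose proof (m_pos k).
  apply sr_pos; [lia|]. intros i Hi. apply Hp. unfold dim.
  assert (Hj3 : (j - 1 <= 3)%nat) by lia.
  apply (Nat.mul_le_mono_r _ _ (3 ^ (k - 1))) in Hj3.
  revert Hi Hj3 H. generalize ((j - 1) * 3 ^ (k - 1))%nat. generalize (3 ^ (k - 1))%nat. intros. lia.
Qed.

Lemma jidx_range i : (1 <= jidx i <= 4)%nat.
Proof.
  unfold jidx. destruct (i mod 4) as [|[|[|]]]; lia.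
Qed.

Lemma sum_blocks k x : sum_range x 1 (dim k) =
  Sigma k 1 x + Sigma k 2 x + Sigma k 3 x + Sigma k 4 x.
Proof.
  unfold dim, Sigma. set (m := (3 ^ (k - 1))%nat).
  replace (4 * m)%nat with (m + m + m + m)%nat by lia.
  rewrite !sr_app. clearbody m.
  replace ((1 - 1) * m + 1)%nat with 1%nat by lia.
  replace ((2 - 1) * m + 1)%nat with (1 + m)%nat by lia.
  replace ((3 - 1) * m + 1)%nat with (1 + (m + m))%nat by lia.
  replace ((4 - 1) * m + 1)%nat with (1 + (m + m + m))%nat by lia.
  lra.
Qed.

Lemma uniform_char k x : in_simplex k x ->
  Fk k x <= 3 * (INR (dim k) - 1) ->
  forall i, (1 <= i <= dim k)%nat -> x i = 1 / INR (dim k).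
Proof.
  intros Hs HF.
  set (D := INR (dim k)).
  assert (HD : 4 <= D) by (unfold D; rewrite dimR; pose proof (Mge1 k); lra).
  set (G := fun j => Tl D (Sigma k j x)).
  assert (Hterm : forall i, (1 <= i <= dim k)%nat ->
     0 <= x i - G (jidx i) /\ (x i - G (jidx i) = 0 -> Sigma k (jidx i) x = 1/4)).
  { intros i Hi. unfold G. apply key; [exact HD | apply Sigma_pos; [exact Hs| apply jidx_range]
      | apply (proj1 Hs); exact Hi | ].
    eapply Rle_trans; [apply (fi_le_Fk k i x Hi)| exact HF]. }
  assert (Hsum : sum_range (fun i => x i - G (jidx i)) 1 (dim k) = 0).
  { rewrite sr_minus. rewrite (proj2 Hs).
    pose proof (sr_period G (3 ^ (k - 1)) 0) as Hper.
    replace (4 * 0 + 1)%nat with 1%nat in Hper by reflexivity.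
    unfold dim. rewrite Hper.
    pose proof (sum_blocks k x) as Hb. rewrite (proj2 Hs) in Hb.
    unfold G, Tl. fold (dim k). replace (INR (3 ^ (k - 1))) with (D / 4).
    2:{ unfold D; rewrite dimR; field. }
    field_simplify; [|lra]. 
    replace (Sigma k 4 x) with (1 - Sigma k 1 x - Sigma k 2 x - Sigma k 3 x) by lra.
    field. lra. }
  intros i Hi.
  assert (E : x i - G (jidx i) = 0).
  { apply (sr_zero (fun i => x i - G (jidx i)) 1 (dim k)); [intros; apply Hterm; lia | exact Hsum | lia]. }
  pose proof (proj2 (Hterm i Hi) E) as HS.
  unfold G, Tl in E. rewrite HS in E. fold D. lra.
Qed.

Lemma uniform_in k : in_simplex k (fun _ => 1 / INR (dim k)).
Proof.
  assert (HD : 4 <= INR (dim k)) by (rewrite dimR; pose proof (Mge1 k); lra).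
  split.
  - intros; apply Rdiv_lt_0_compat; lra.
  - rewrite sr_const. field. lra.
Qed.

Lemma uniform_F k : Fk k (fun _ => 1 / INR (dim k)) <= 3 * (INR (dim k) - 1).
Proof.
  assert (HD : 4 <= INR (dim k)) by (rewrite dimR; pose proof (Mge1 k); lra).
  assert (Hf : forall i, f_i k i (fun _ => 1 / INR (dim k)) = 3 * (INR (dim k) - 1)).
  { intro i. unfold f_i, Sigma. rewrite sr_const. unfold Defs.sigma.
    rewrite dimR. rewrite dimR in HD. field. lra. }
  unfold Fk. apply fold_max_le; [rewrite Hf; lra|].
  intros y Hy. apply in_map_iff in Hy. destruct Hy as [i [<- _]]. rewrite Hf; lra.
Qed.

Theorem mainTheorem10 (k : nat) (hk : (2 <= k)%nat) (xs ys : nat -> R)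
  (hx : in_simplex k xs) (hy : in_simplex k ys)
  (hFx : is_inf_on_simplex k (Fk k xs)) (hFy : is_inf_on_simplex k (Fk k ys)) :
  forall i, (1 <= i <= dim k)%nat -> xs i = ys i.
Proof.
  intros i Hi.
  assert (Ax : Fk k xs <= 3 * (INR (dim k) - 1)).
  { eapply Rle_trans; [apply (proj1 hFx); apply uniform_in | apply uniform_F]. }
  assert (Ay : Fk k ys <= 3 * (INR (dim k) - 1)).
  { eapply Rle_trans; [apply (proj1 hFy); apply uniform_in | apply uniform_F]. }
  rewrite (uniform_char k xs hx Ax i Hi), (uniform_char k ys hy Ay i Hi). reflexivity.
Qed.
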